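(* For integers $k\ge1$ let $Z_k$ have the Gamma distribution with shape $k$ and rate $k$, and for $\delta\in(0,1)$ let $V(k,\delta)=\inf\{y: \mathbb P(|Z_k-1|\le y)\ge 1-\delta/2\}$ be the $(1-\delta/2)$-quantile of $|Z_k-1|$. There exist universal constants $0<c_1\le 1$ and $0<c_2\le 2$ such that for all integers $k\ge1$ and all $\delta\in(0,1)$, $$V(k,\delta)\ge c_1\Bigl(\sqrt{\frac{0\vee\log(c_2/\delta)}{k}}+\frac{\log(c_2/\delta)}{k}\Bigr).$$ *)

(* Defs.v *)
From Stdlib Require Import Reals.
From Coquelicot Require Import Coquelicot.
Open Scope R_scope.

Definition gamma_kk_density (k : nat) (x : R) : R :=
  if Rle_dec x 0 then 0
  else (INR k) ^ k * x ^ (k - 1) * exp (- INR k * x) / INR (Factorial.fact (k - 1)).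

(* P(|Z_k - 1| <= y) where Z_k ~ Gamma(shape k, rate k).
   For y < 0 the event is empty; for y >= 0 it is the event
   Z_k in [1-y, 1+y], i.e. (since Z_k > 0 a.s.) Z_k in [max 0 (1-y), 1+y]. *)
Definition prob_abs_dev_le (k : nat) (y : R) : R :=
  if Rlt_dec y 0 then 0
  else RInt (gamma_kk_density k) (Rmax 0 (1 - y)) (1 + y).

Definition V (k : nat) (delta : R) : Rbar :=
  Glb_Rbar (fun y => prob_abs_dev_le k y >= 1 - delta / 2).

(* Main.v *)
Require Import Defs.
From Stdlib Require Import Reals Lra Lia Psatz.
From Coquelicot Require Import Coquelicot.
Open Scope R_scope.
Lemma ln_lower (u : R) : 0 <= u -> 2 * u / (2 + u) <= ln (1 + u).
Proof.
  intros Hu.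
  destruct (Req_dec u 0) as [->|Hu0].
  { replace (1+0) with 1 by ring. rewrite ln_1. lra. }
  set (phi := fun x => ln (1 + x) - 2 * x / (2 + x)).
  assert (Hd : forall x, 0 <= x -> is_derive phi x (/ (1 + x) - 4 / (2 + x)^2)).
  { intros x Hx. unfold phi. auto_derive.
    - lra.
    - field. lra. }
  destruct (MVT_gen phi 0 u (fun x => / (1 + x) - 4 / (2 + x)^2)) as [c [Hc E]].
  - intros x Hx. apply Hd. rewrite Rmin_left in Hx; lra.
  - intros x Hx. apply continuity_pt_filterlim. apply (ex_derive_continuous (K:=R_AbsRing) (V:=R_NormedModule) phi).
    eexists. apply Hd. rewrite Rmin_left in Hx; lra.
  - rewrite Rmin_left in Hc; [|lra]. rewrite Rmax_right in Hc; [|lra].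
    assert (H0 : phi 0 = 0). { unfold phi. replace (1+0) with 1 by ring. rewrite ln_1. field. }
    assert (Hpos : 0 <= / (1 + c) - 4 / (2 + c)^2).
    { assert (/ (1 + c) - 4 / (2 + c)^2 = c^2 / ((1+c)*(2+c)^2)) as -> by (field; lra).
      apply Rmult_le_pos. nra. apply Rlt_le, Rinv_0_lt_compat. nra. }
    assert (phi u >= 0) by nra.
    unfold phi in H. lra.
Qed.

Lemma exp_le (x y : R) : x <= y -> exp x <= exp y.
Proof. intros [H|H]. apply Rlt_le, exp_increasing, H. subst; lra. Qed.

Lemma pow_exp (x : R) (n : nat) : 0 < x -> x ^ n = exp (INR n * ln x).
Proof. intros Hx. rewrite <- Rpower_pow by lra. reflexivity. Qed.

Lemma sqrt_exp (x : R) : 0 < x -> sqrt x = exp (ln x / 2).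
Proof. intros Hx. rewrite <- Rpower_sqrt by lra. unfold Rpower. f_equal. field. Qed.

Lemma stir_key (N : nat) : (1 <= N)%nat ->
  INR N ^ (N+1) * exp 1 * sqrt (INR N + 1) <= (INR N + 1) ^ (N+1) * sqrt (INR N).
Proof.
  intros HN. set (m := INR N).
  assert (Hm : 1 <= m) by (unfold m; apply (le_INR 1 N) in HN; simpl in HN; lra).
  set (q := (m + 1) / m).
  assert (Hq : 0 < q) by (unfold q; apply Rdiv_lt_0_compat; lra).
  assert (E1 : m + 1 = q * m) by (unfold q; field; lra).
  rewrite E1, Rpow_mult_distr, sqrt_mult by lra.
  assert (Hpm : 0 < m ^ (N+1)) by (apply pow_lt; lra).
  assert (Hsm : 0 < sqrt m) by (apply sqrt_lt_R0; lra).
  assert (exp 1 * sqrt q <= q ^ (N+1)).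
  { rewrite pow_exp, sqrt_exp, <- exp_plus by lra. apply exp_le.
    assert (Hl := ln_lower (1/m) ltac:(apply Rlt_le, Rdiv_lt_0_compat; lra)).
    replace (1 + 1/m) with q in Hl by (unfold q; field; lra).
    rewrite plus_INR. fold m. simpl INR.
    assert (2 * (1/m) / (2 + 1/m) = 2 / (2*m+1)) as E2 by (field; lra).
    rewrite E2 in Hl.
    apply (Rmult_le_compat_l (2*m+1)) in Hl; [|lra].
    replace ((2*m+1) * (2/(2*m+1))) with 2 in Hl by (field; lra).
    nra. }
  replace (m ^ (N + 1) * exp 1 * (sqrt q * sqrt m)) with ((exp 1 * sqrt q) * (m ^ (N + 1) * sqrt m)) by ring.
  replace (q ^ (N + 1) * m ^ (N + 1) * sqrt m) with (q ^ (N + 1) * (m ^ (N + 1) * sqrt m)) by ring.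
  apply Rmult_le_compat_r; [|assumption]. apply Rmult_le_pos; lra.
Qed.

Lemma stirling (n : nat) :
  INR (Factorial.fact n) * exp (INR n) * sqrt (INR n + 1) <= (INR n + 1) ^ (n + 1).
Proof.
  induction n as [|n IH].
  - simpl. rewrite exp_0, Rplus_0_l, sqrt_1. lra.
  - assert (Hk := stir_key (S n) ltac:(lia)).
    rewrite S_INR in Hk. rewrite S_INR.
    assert (Hs1 : 0 < sqrt (INR n + 1)) by (apply sqrt_lt_R0; pose proof (pos_INR n); lra).
    assert (Hf : INR (Factorial.fact (S n)) = (INR n + 1) * INR (Factorial.fact n)).
    { simpl Factorial.fact. rewrite plus_INR, mult_INR. ring. }
    rewrite Hf.
    rewrite exp_plus.
    assert (Hfe : INR (Factorial.fact n) * exp (INR n) <= (INR n + 1) ^ (n+1) / sqrt (INR n + 1)).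
    { apply (Rmult_le_reg_r (sqrt (INR n + 1))); [lra|].
      replace ((INR n + 1) ^ (n + 1) / sqrt (INR n + 1) * sqrt (INR n + 1)) with ((INR n + 1) ^ (n + 1)) by (field; lra). exact IH. }
    replace (S n + 1)%nat with (S (n+1)) by lia.
    replace (S n + 1)%nat with (S (n+1)) in Hk by lia.
    assert (Hp : 0 <= (INR n + 1) * exp 1 * sqrt (INR n + 1 + 1)).
    { apply Rmult_le_pos; [apply Rmult_le_pos|apply sqrt_pos].
      pose proof (pos_INR n); lra. apply Rlt_le, exp_pos. }
    apply Rle_trans with ((INR n + 1) ^ (n+1) / sqrt (INR n + 1) * ((INR n + 1) * exp 1 * sqrt (INR n + 1 + 1))).
    { replace ((INR n + 1) * INR (Factorial.fact n) * (exp (INR n) * exp 1) * sqrt (INR n + 1 + 1))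
        with (INR (Factorial.fact n) * exp (INR n) * ((INR n + 1) * exp 1 * sqrt (INR n + 1 + 1))) by ring.
      apply Rmult_le_compat_r; assumption. }
    apply (Rmult_le_reg_r (sqrt (INR n + 1))); [lra|].
    replace ((INR n + 1) ^ (n + 1) / sqrt (INR n + 1) * ((INR n + 1) * exp 1 * sqrt (INR n + 1 + 1)) * sqrt (INR n + 1))
      with ((INR n + 1) ^ (S (n + 1)) * exp 1 * sqrt (INR n + 1 + 1)) by (simpl; field; lra).
    simpl pow in Hk |- *. lra.
Qed.
Fixpoint Ssum (c x : R) (n : nat) : R :=
  match n with
  | O => 1
  | S m => Ssum c x m + (c * x) ^ (S m) / INR (Factorial.fact (S m))
  end.

Lemma fact_S_INR n : INR (Factorial.fact (S n)) = INR (S n) * INR (Factorial.fact n).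
Proof. rewrite <- mult_INR. reflexivity. Qed.

Lemma is_derive_ext_R (f g : R -> R) (x l : R) :
  (forall t : R, f t = g t) -> is_derive f x l -> is_derive g x l.
Proof. intros H1 H2. eapply is_derive_ext; eauto. Qed.

Lemma dH (c : R) (n : nat) (x : R) :
  is_derive (fun x => exp (- c * x) * Ssum c x n) x
    (- (c ^ (S n) * x ^ n * exp (- c * x) / INR (Factorial.fact n))).
Proof.
  induction n as [|n IH].
  - assert (H0 : is_derive (fun x => exp (- c * x)) x (- c * exp (- c * x))).
    { auto_derive; [trivial|]. ring. }
    replace (- (c ^ 1 * x ^ 0 * exp (- c * x) / INR (Factorial.fact 0))) with (- c * exp (- c * x)) by (simpl; field).
    apply (is_derive_ext_R (fun x => exp (- c * x))); [|exact H0]. intros t. simpl. ring.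
  - apply (is_derive_ext_R (fun x => exp (- c * x) * Ssum c x n +
         exp (- c * x) * ((c * x) ^ (S n) / INR (Factorial.fact (S n))))).
    { intros t. change (Ssum c t (S n)) with (Ssum c t n + (c*t)^(S n)/INR(Factorial.fact (S n))). ring. }
    assert (H2 : is_derive (fun x => exp (- c * x) * ((c * x) ^ (S n) / INR (Factorial.fact (S n)))) x
       (- c * exp (- c * x) * ((c * x) ^ (S n) / INR (Factorial.fact (S n)))
        + c ^ (S n) * x ^ n * exp (- c * x) / INR (Factorial.fact n))).
    { auto_derive; [trivial|].
      change (match n with 0%nat => 1 | S _ => INR n + 1 end) with (INR (S n)).
      change (INR (Factorial.fact n + n * Factorial.fact n)) with (INR (Factorial.fact (S n))).
      rewrite !fact_S_INR. pose proof (INR_fact_neq_0 n). 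
      assert (INR (S n) <> 0) by (apply not_0_INR; lia).
      change ((c * x) ^ S n) with ((c*x) * (c*x)^n). change (c ^ S n) with (c * c^n).
      rewrite Rpow_mult_distr. field. auto. }
    replace (- (c ^ S (S n) * x ^ S n * exp (- c * x) / INR (Factorial.fact (S n))))
      with (- (c ^ (S n) * x ^ n * exp (- c * x) / INR (Factorial.fact n)) +
       (- c * exp (- c * x) * ((c * x) ^ (S n) / INR (Factorial.fact (S n)))
        + c ^ (S n) * x ^ n * exp (- c * x) / INR (Factorial.fact n))).
    2:{ rewrite fact_S_INR. pose proof (INR_fact_neq_0 n).
        assert (INR (S n) <> 0) by (apply not_0_INR; lia).
        change ((c * x) ^ S n) with ((c*x) * (c*x)^n). change (c ^ S (S n)) with (c * (c * c^n)).
        change (c ^ S n) with (c * c^n). change (x ^ S n) with (x * x^n).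
        rewrite Rpow_mult_distr. field. auto. }
    apply (is_derive_plus (K:=R_AbsRing) (V:=R_NormedModule)); assumption.
Qed.

Definition G (k : nat) (x : R) : R := exp (- INR k * x) * Ssum (INR k) x (k - 1).
Definition gpoly (k : nat) (x : R) : R :=
  (INR k) ^ k * x ^ (k - 1) * exp (- INR k * x) / INR (Factorial.fact (k - 1)).

Lemma G_deriv k x : (1 <= k)%nat -> is_derive (fun t => - G k t) x (gpoly k x).
Proof.
  intros Hk. destruct k as [|n]; [lia|].
  unfold G, gpoly. replace (S n - 1)%nat with n by lia.
  pose proof (dH (INR (S n)) n x) as H.
  apply (is_derive_opp (K:=R_AbsRing) (V:=R_NormedModule)) in H.
  replace (INR (S n) ^ S n * x ^ n * exp (- INR (S n) * x) / INR (Factorial.fact n))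
    with (opp (- (INR (S n) ^ S n * x ^ n * exp (- INR (S n) * x) / INR (Factorial.fact n)))).
  2:{ unfold opp; simpl. ring. }
  eapply is_derive_ext_R; [|exact H]. intros t. reflexivity.
Qed.

Lemma gpoly_cont k x : continuous (gpoly k) x.
Proof.
  apply (ex_derive_continuous (K:=R_AbsRing) (V:=R_NormedModule)).
  unfold gpoly. auto_derive. trivial.
Qed.

Lemma FTC k a b : (1 <= k)%nat -> is_RInt (gpoly k) a b (G k a - G k b).
Proof.
  intros Hk.
  pose proof (is_RInt_derive (V:=R_CompleteNormedModule) (fun t => - G k t) (gpoly k) a b
     (fun x _ => G_deriv k x Hk) (fun x _ => gpoly_cont k x)) as H.
  replace (G k a - G k b) with (minus (- G k b) (- G k a)) by (unfold minus, plus, opp; simpl; ring).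
  exact H.
Qed.

Lemma Ssum_0 c n : Ssum c 0 n = 1.
Proof.
  induction n as [|n IH]; [reflexivity|].
  simpl Ssum. rewrite IH. rewrite Rmult_0_r, Rmult_0_l. unfold Rdiv. rewrite Rmult_0_l. ring.
Qed.

Lemma G0 k : G k 0 = 1.
Proof. unfold G. rewrite Ssum_0, Rmult_0_r, exp_0. ring. Qed.

Lemma Ssum_nonneg c x n : 0 <= c -> 0 <= x -> 0 <= Ssum c x n.
Proof.
  intros Hc Hx. induction n as [|n IH]; [simpl; lra|].
  change (Ssum c x (S n)) with (Ssum c x n + (c*x)^(S n)/INR(Factorial.fact (S n))).
  apply Rplus_le_le_0_compat; [exact IH|].
  apply Rmult_le_pos; [apply pow_le; nra|].
  apply Rlt_le, Rinv_0_lt_compat, INR_fact_lt_0.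
Qed.

Lemma G_nonneg k x : 0 <= x -> 0 <= G k x.
Proof.
  intros Hx. unfold G. apply Rmult_le_pos; [apply Rlt_le, exp_pos|].
  apply Ssum_nonneg; [apply pos_INR|exact Hx].
Qed.

Lemma gpoly_nonneg k x : 0 <= x -> 0 <= gpoly k x.
Proof.
  intros Hx. unfold gpoly. apply Rmult_le_pos.
  - apply Rmult_le_pos; [apply Rmult_le_pos; apply pow_le; try apply pos_INR; lra|].
    apply Rlt_le, exp_pos.
  - apply Rlt_le, Rinv_0_lt_compat, INR_fact_lt_0.
Qed.

Lemma G_le1 k a : (1 <= k)%nat -> 0 <= a -> G k a <= 1.
Proof.
  intros Hk Ha.
  pose proof (FTC k 0 a Hk) as H.
  assert (0 <= RInt (gpoly k) 0 a).
  { apply RInt_ge_0; [exact Ha| eexists; exact H|].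
    intros x Hx. apply gpoly_nonneg. lra. }
  rewrite (is_RInt_unique _ _ _ _ H), G0 in H0. lra.
Qed.

Lemma prob_eq k y : (1 <= k)%nat -> 0 <= y ->
  prob_abs_dev_le k y = G k (Rmax 0 (1 - y)) - G k (1 + y).
Proof.
  intros Hk Hy. unfold prob_abs_dev_le.
  destruct (Rlt_dec y 0) as [Hl|_]; [lra|].
  apply is_RInt_unique.
  set (a := Rmax 0 (1 - y)).
  assert (Ha0 : 0 <= a) by (apply Rmax_l).
  assert (Ha1 : a <= 1 + y) by (unfold a; apply Rmax_lub; lra).
  apply (is_RInt_ext (gpoly k)); [|apply FTC, Hk].
  intros x Hx. rewrite Rmin_left in Hx by lra.
  unfold gamma_kk_density, gpoly. destruct (Rle_dec x 0); [lra|reflexivity].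
Qed.

Lemma prob_le k y : (1 <= k)%nat -> 0 <= y ->
  prob_abs_dev_le k y <= 1 - G k (1 + y).
Proof.
  intros Hk Hy. rewrite prob_eq by assumption.
  pose proof (G_le1 k (Rmax 0 (1 - y)) Hk (Rmax_l _ _)). lra.
Qed.

Lemma tail_lb k y w m : (1 <= k)%nat -> 0 <= y -> 0 < w ->
  (forall t, 1 + y < t < 1 + y + w -> m <= gpoly k t) ->
  w * m <= G k (1 + y).
Proof.
  intros Hk Hy Hw Hm.
  pose proof (FTC k (1 + y) (1 + y + w) Hk) as H.
  assert (RInt (fun _ => m) (1 + y) (1 + y + w) <= RInt (gpoly k) (1 + y) (1 + y + w)).
  { apply RInt_le; [lra|apply ex_RInt_const|eexists; exact H|exact Hm]. }
  rewrite RInt_const, (is_RInt_unique _ _ _ _ H) in H0.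
  unfold scal in H0; simpl in H0; unfold mult in H0; simpl in H0.
  pose proof (G_nonneg k (1 + y + w) ltac:(lra)).
  replace (1 + y + w - (1 + y)) with w in H0 by ring. lra.
Qed.

Lemma g_lb k t : (1 <= k)%nat -> 1 <= t ->
  sqrt (INR k) * exp (-1 - INR k * (t - 1 - ln t) - ln t) <= gpoly k t.
Proof.
  intros Hk Ht. destruct k as [|n]; [lia|].
  unfold gpoly. replace (S n - 1)%nat with n by lia.
  pose proof (stirling n) as Hs. rewrite <- S_INR in Hs.
  replace (n + 1)%nat with (S n) in Hs by lia.
  set (K := INR (S n)) in *.
  assert (HK : K = INR n + 1) by (unfold K; apply S_INR).
  rewrite (pow_exp t n) by lra.
  set (X := exp (INR n * ln t) * exp (- K * t)).
  assert (HX : 0 < X) by (unfold X; apply Rmult_lt_0_compat; apply exp_pos).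
  assert (Hf := INR_fact_lt_0 n).
  replace (K ^ S n * exp (INR n * ln t) * exp (- K * t) / INR (Factorial.fact n))
    with (K ^ S n / INR (Factorial.fact n) * X) by (unfold X; field; lra).
  assert (E : exp (-1 - K * (t - 1 - ln t) - ln t) = exp (INR n) * X).
  { unfold X. rewrite <- !exp_plus. f_equal. rewrite HK. ring. }
  rewrite E.
  assert (exp (INR n) * sqrt K <= K ^ S n / INR (Factorial.fact n)).
  { apply (Rmult_le_reg_l (INR (Factorial.fact n))); [lra|].
    replace (INR (Factorial.fact n) * (K ^ S n / INR (Factorial.fact n))) with (K ^ S n) by (field; lra).
    lra. }
  replace (sqrt K * (exp (INR n) * X)) with ((exp (INR n) * sqrt K) * X) by ring.
  apply Rmult_le_compat_r; lra.
Qed.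

Lemma ln1p_bounds s : 0 <= s -> s - s ^ 2 / 2 <= ln (1 + s) /\ ln (1 + s) <= s /\ 0 <= ln (1 + s).
Proof.
  intros Hs. pose proof (ln_lower s Hs) as H1.
  split; [|split].
  - assert (s - s ^ 2 / 2 <= 2 * s / (2 + s)).
    { apply (Rmult_le_reg_r (2 + s)); [lra|].
      replace (2 * s / (2 + s) * (2 + s)) with (2 * s) by (field; lra). nra. }
    lra.
  - apply Rle_trans with (ln (exp s)); [|rewrite ln_exp; lra]. apply ln_le; [lra|]. pose proof (exp_ineq1_le s). lra.
  - rewrite <- ln_1. apply ln_le; lra.
Qed.

Lemma caseA k L y : (1 <= k)%nat -> 0 < L -> L <= INR k -> 0 <= y ->
  y < (sqrt (L / INR k) + L / INR k) / 16 -> exp (-4 - L) < G k (1 + y).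
Proof.
  intros Hk HL HLk Hy Hyb.
  set (kk := INR k) in *.
  assert (Hkk : 1 <= kk) by (unfold kk; apply (le_INR 1 k) in Hk; simpl in Hk; lra).
  set (r := sqrt (L / kk)) in *.
  assert (Hr0 : 0 <= r) by apply sqrt_pos.
  assert (Hr2 : r * r = L / kk) by (apply sqrt_sqrt; apply Rlt_le, Rdiv_lt_0_compat; lra).
  assert (HLr : L = kk * (r * r)) by (rewrite Hr2; field; lra).
  assert (Hr1 : r <= 1).
  { destruct (Rle_dec r 1) as [h|h]; [exact h|]. exfalso. assert (r * r > 1) by nra. assert (kk * (r * r) > kk * 1) by (apply Rmult_lt_compat_l; lra). lra. }
  rewrite <- Hr2 in Hyb.
  assert (Hy8 : y < r / 8) by nra.
  assert (Hyy : y * y <= (r * r) / 64) by nra.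
  assert (Hky : kk * (y * y) <= L / 64) by (rewrite HLr; apply Rle_trans with (kk * ((r * r) / 64)); [apply Rmult_le_compat_l; lra|lra]).
  set (sk := sqrt kk).
  assert (Hsk2 : sk * sk = kk) by (apply sqrt_sqrt; lra).
  assert (Hsk0 : 0 <= sk) by apply sqrt_pos.
  assert (Hsk1 : 1 <= sk) by (destruct (Rle_dec 1 sk) as [h|h]; [exact h|nra]).
  set (w := / sk).
  assert (Hw : 0 < w) by (apply Rinv_0_lt_compat; lra).
  assert (Hw1 : w <= 1) by (unfold w; rewrite <- Rinv_1; apply Rinv_le_contravar; lra).
  assert (Hskw : sk * w = 1) by (unfold w; field; lra).
  set (m := sk * exp (-1 - kk * ((y + w) ^ 2 / 2) - (y + w))).
  assert (Htl := tail_lb k y w m Hk Hy Hw).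
  assert (Hwm : w * m = exp (-1 - kk * ((y + w) ^ 2 / 2) - (y + w))).
  { unfold m. rewrite <- Rmult_assoc, (Rmult_comm w sk), Hskw. ring. }
  assert (w * m <= G k (1 + y)).
  { apply Htl. intros t Ht.
    apply Rle_trans with (sqrt (INR k) * exp (-1 - INR k * (t - 1 - ln t) - ln t)); [|apply g_lb; [exact Hk|lra]].
    unfold m. fold kk sk. apply Rmult_le_compat_l; [lra|]. apply exp_le.
    set (s := t - 1). replace t with (1 + s) by (unfold s; ring).
    assert (Hs : 0 <= s) by (unfold s; lra).
    destruct (ln1p_bounds s Hs) as [B1 [B2 B3]].
    assert (s ^ 2 <= (y + w) ^ 2) by (unfold s; simpl; nra).
    assert (s <= y + w) by (unfold s; lra).
    nra. }
  assert (-4 - L < -1 - kk * ((y + w) ^ 2 / 2) - (y + w)).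
  { assert (kk * ((y + w) ^ 2) = kk * (y * y) + 2 * sk * y + 1).
    { rewrite <- Hsk2. simpl. replace (sk * sk * ((y + w) * ((y + w) * 1))) with
        ((sk * y) * (sk * y) + 2 * (sk * w) * (sk * y) + (sk * w) * (sk * w)) by ring.
      rewrite Hskw. ring. }
    assert (2 * sk * y <= kk * (y * y) + 1) by (rewrite <- Hsk2; pose proof (Rle_0_sqr (sk * y - 1)); unfold Rsqr in *; nra).
    nra. }
  apply Rlt_le_trans with (w * m); [|assumption].
  rewrite Hwm. apply exp_increasing. assumption.
Qed.

Lemma caseB k L y : (1 <= k)%nat -> INR k < L -> 0 <= y ->
  y < (sqrt (L / INR k) + L / INR k) / 16 -> exp (-4 - L) < G k (1 + y).
Proof.
  intros Hk HLk Hy Hyb.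
  set (kk := INR k) in *.
  assert (Hkk : 1 <= kk) by (unfold kk; apply (le_INR 1 k) in Hk; simpl in Hk; lra).
  set (r := sqrt (L / kk)) in *.
  assert (Hr0 : 0 <= r) by apply sqrt_pos.
  assert (Hr2 : r * r = L / kk) by (apply sqrt_sqrt; apply Rlt_le, Rdiv_lt_0_compat; lra).
  assert (HLr : L = kk * (r * r)) by (rewrite Hr2; field; lra).
  assert (Hr1 : 1 < r).
  { destruct (Rlt_dec 1 r) as [h|h]; [exact h|]. exfalso. assert (r * r <= 1) by nra.
    assert (kk * (r * r) <= kk * 1) by (apply Rmult_le_compat_l; lra). lra. }
  rewrite <- Hr2 in Hyb.
  assert (Hy8 : y < r * r / 8) by nra.
  assert (Hky : kk * y <= L / 8) by (rewrite HLr; apply Rle_trans with (kk * (r * r / 8)); [apply Rmult_le_compat_l; lra|lra]).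
  set (sk := sqrt kk).
  assert (Hsk0 : 0 <= sk) by apply sqrt_pos.
  set (w := / kk).
  assert (Hw : 0 < w) by (apply Rinv_0_lt_compat; lra).
  assert (Hw1 : w <= 1) by (unfold w; rewrite <- Rinv_1; apply Rinv_le_contravar; lra).
  assert (Hkw : kk * w = 1) by (unfold w; field; lra).
  set (m := sk * exp (-1 - kk * (y + w) - (y + w))).
  assert (Htl := tail_lb k y w m Hk Hy Hw).
  assert (Hwm : w * m = exp (- ln kk / 2 - 1 - kk * (y + w) - (y + w))).
  { unfold m, sk, w. rewrite sqrt_exp by lra.
    assert (Ei : / kk = exp (- ln kk)) by (rewrite exp_Ropp, exp_ln; lra).
    rewrite Ei, <- !exp_plus. f_equal. field. }
  assert (w * m <= G k (1 + y)).
  { apply Htl. intros t Ht.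
    apply Rle_trans with (sqrt (INR k) * exp (-1 - INR k * (t - 1 - ln t) - ln t)); [|apply g_lb; [exact Hk|lra]].
    unfold m. fold kk sk. apply Rmult_le_compat_l; [lra|]. apply exp_le.
    set (s := t - 1). replace t with (1 + s) by (unfold s; ring).
    assert (Hs : 0 <= s) by (unfold s; lra).
    destruct (ln1p_bounds s Hs) as [B1 [B2 B3]].
    assert (s <= y + w) by (unfold s; lra).
    nra. }
  assert (Hln : ln kk <= kk - 1).
  { replace kk with (1 + (kk - 1)) at 1 by ring. apply ln1p_bounds. lra. }
  assert (-4 - L < - ln kk / 2 - 1 - kk * (y + w) - (y + w)).
  { assert (y <= kk * y) by nra. nra. }
  apply Rlt_le_trans with (w * m); [|assumption].
  rewrite Hwm. apply exp_increasing. assumption.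
Qed.

Theorem lemma5 :
  exists c1 c2 : R,
    0 < c1 <= 1 /\ 0 < c2 <= 2 /\
    forall (k : nat) (delta : R),
      (1 <= k)%nat -> 0 < delta < 1 ->
      Rbar_le
        (Finite (c1 * (sqrt (Rmax 0 (ln (c2 / delta)) / INR k)
                       + ln (c2 / delta) / INR k)))
        (V k delta).
Proof.
  exists (1/16), (2 * exp (-4)).
  assert (He4 : 0 < exp (-4)) by apply exp_pos.
  assert (He41 : exp (-4) <= 1) by (rewrite <- exp_0; apply exp_le; lra).
  split; [lra|]. split; [lra|].
  intros k delta Hk Hd.
  assert (Hkk : 1 <= INR k) by (apply (le_INR 1 k) in Hk; simpl in Hk; lra).
  set (L := ln (2 * exp (-4) / delta)).
  assert (HdL : delta / 2 = exp (-4 - L)).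
  { unfold L. rewrite Rminus_def, exp_plus, exp_Ropp, exp_ln.
    - field. lra.
    - apply Rdiv_lt_0_compat; lra. }
  unfold V. destruct (Glb_Rbar_correct (fun y => prob_abs_dev_le k y >= 1 - delta / 2)) as [_ Hglb].
  apply Hglb. intros y Hy. simpl.
  destruct (Rle_dec (1 / 16 * (sqrt (Rmax 0 L / INR k) + L / INR k)) y) as [h|Hlt]; [exact h|].
  exfalso. apply Rnot_le_lt in Hlt.
  destruct (Rlt_dec y 0) as [Hy0|Hy0].
  { unfold prob_abs_dev_le in Hy. destruct (Rlt_dec y 0); [lra|contradiction]. }
  apply Rnot_lt_le in Hy0.
  destruct (Rle_dec L 0) as [HL0|HL0].
  { rewrite Rmax_left in Hlt by lra.
    replace (0 / INR k) with 0 in Hlt by (field; lra). rewrite sqrt_0 in Hlt.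
    assert (L / INR k <= 0).
    { unfold Rdiv. apply Rmult_le_0_r; [lra|]. apply Rlt_le, Rinv_0_lt_compat. lra. }
    lra. }
  apply Rnot_le_lt in HL0.
  rewrite Rmax_right in Hlt by lra.
  assert (Hyb : y < (sqrt (L / INR k) + L / INR k) / 16) by lra.
  assert (HG : exp (-4 - L) < G k (1 + y)).
  { destruct (Rle_dec L (INR k)) as [HLk|HLk].
    - exact (caseA k L y Hk HL0 HLk Hy0 Hyb).
    - apply Rnot_le_lt in HLk. exact (caseB k L y Hk HLk Hy0 Hyb). }
  pose proof (prob_le k y Hk Hy0). lra.
Qed.
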